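(* Let $(a,b,c,\lambda)\in(\mathbb F^\times)^4$ and let $O$ be a $\triangle_q$-submodule of $M_\lambda(a,b,c)$ with $m_0\notin O$. Then: (i) $m_0+O$ is a marginal weight vector of $M_\lambda(a,b,c)/O$ with weight $b\lambda^{-1}$; (ii) $m_0+O$ is a marginal weight vector of $M_\lambda(a,b,c)/O$ with weight $b^{-1}\lambda$ if and only if $b\lambda^{-1}=b^{-1}\lambda$, or $m_0+O$ and $m_1+O$ are linearly dependent.
   Context: $\mathbb F$ is an algebraically closed field and $q\in\mathbb F^\times$ a root of unity of order $d\notin\{1,2,4\}$. $\triangle_q$ is the unital associative $\mathbb F$-algebra with generators $A,B,C$ subject to: each of $A+\frac{qBC-q^{-1}CB}{q^2-q^{-2}}$, $B+\frac{qCA-q^{-1}AC}{q^2-q^{-2}}$, $C+\frac{qAB-q^{-1}BA}{q^2-q^{-2}}$ is central; $\alpha,\beta,\gamma$ are these times $q+q^{-1}$. For a $\triangle_q$-module $V$ and $\mu\in\mathbb F^\times$ let $V(\mu)=\{v\in V: Bv=(\mu+\mu^{-1})v\}$; a marginal weight vector of $V$ with weight $\mu$ is a nonzero $v\in V(\mu)$ that is an eigenvector of $(B-\mu q^2-\mu^{-1}q^{-2})A$. For $(a,b,c,\lambda)\in(\mathbb F^\times)^4$, $i\in\mathbb N$: $\theta_i=a\lambda^{-1}q^{2i}+a^{-1}\lambda q^{-2i}$, $\theta_i^*=b\lambda^{-1}q^{2i}+b^{-1}\lambda q^{-2i}$, $\varphi_i=a^{-1}b^{-1}\lambda q(q^i-q^{-i})(\lambda^{-1}q^{i-1}-\lambda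 q^{1-i})(q^{-i}-abc\lambda^{-1}q^{i-1})(q^{-i}-abc^{-1}\lambda^{-1}q^{i-1})$. $M_\lambda(a,b,c)$ is the $\triangle_q$-module with basis $\{m_i\}_{i\in\mathbb N}$, $(A-\theta_i)m_i=m_{i+1}$, $(B-\theta_i^* )m_i=\varphi_im_{i-1}$, with $\alpha,\beta,\gamma$ acting as $(b+b^{-1})(c+c^{-1})+(a+a^{-1})(\lambda q+\lambda^{-1}q^{-1})$, $(c+c^{-1})(a+a^{-1})+(b+b^{-1})(\lambda q+\lambda^{-1}q^{-1})$, $(a+a^{-1})(b+b^{-1})+(c+c^{-1})(\lambda q+\lambda^{-1}q^{-1})$. *)

(* Defs.v *)
From mathcomp Require Import all_boot all_algebra.
Set Implicit Arguments. Unset Strict Implicit. Unset Printing Implicit Defensive.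
Import GRing.Theory.
Local Open Scope ring_scope.

(* The module M_lambda(a,b,c) is realised on the F-vector space {poly F}:
   the basis vector m_i is the monomial 'X^i, so a vector is a finite
   F-linear combination of the m_i. *)

Section MLambda.
Variables (F : fieldType) (q a b c lam : F).

Definition theta (i : nat) : F :=
  a * lam^-1 * q ^+ (2 * i) + a^-1 * lam * q ^- (2 * i).
Definition thetas (i : nat) : F :=
  b * lam^-1 * q ^+ (2 * i) + b^-1 * lam * q ^- (2 * i).
Definition phi (i : nat) : F :=
  a^-1 * b^-1 * lam * q * (q ^+ i - q ^- i)
  * (lam^-1 * q ^ (i%:Z - 1) - lam * q ^ (1 - i%:Z))
  * (q ^- i - a * b * c * lam^-1 * q ^ (i%:Z - 1))
  * (q ^- i - a * b * c^-1 * lam^-1 * q ^ (i%:Z - 1)).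

Definition mvec (i : nat) : {poly F} := 'X^i.

Definition Aop (p : {poly F}) : {poly F} :=
  \sum_(0 <= i < size p) p`_i *: (theta i *: 'X^i + 'X^(i.+1)).
(* (B - theta*_i) m_i = phi_i m_{i-1}   (phi_0 = 0, so m_{-1} never occurs) *)
Definition Bop (p : {poly F}) : {poly F} :=
  \sum_(0 <= i < size p) p`_i *: (thetas i *: 'X^i + phi i *: 'X^(i.-1)).

Definition gamma_sc : F :=
  (a + a^-1) * (b + b^-1) + (c + c^-1) * (lam * q + lam^-1 * q^-1).

(* C is determined by the centrality of
   C + (qAB - q^-1 BA)/(q^2 - q^-2) = gamma/(q + q^-1). *)
Definition Cop (p : {poly F}) : {poly F} :=
  (gamma_sc / (q + q^-1)) *: p
  - (q ^+ 2 - q ^- 2)^-1 *: (q *: Aop (Bop p) - q^-1 *: Bop (Aop p)).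

Definition submodule (O : {poly F} -> Prop) : Prop :=
  [/\ O 0,
      (forall u v, O u -> O v -> O (u + v)),
      (forall (k : F) u, O u -> O (k *: u)) &
      [/\ (forall u, O u -> O (Aop u)),
           (forall u, O u -> O (Bop u)) &
           (forall u, O u -> O (Cop u))]].

Definition marginal_weight_vector_quot (O : {poly F} -> Prop) (mu : F)
    (v : {poly F}) : Prop :=
  [/\ ~ O v,
      O (Bop v - (mu + mu^-1) *: v) &
      exists k : F,
        O (Bop (Aop v) - (mu * q ^+ 2 + mu^-1 * q ^- 2) *: Aop v - k *: v)].

Definition lin_dep_quot (O : {poly F} -> Prop) (u v : {poly F}) : Prop :=
  exists x y : F, (x != 0 \/ y != 0) /\ O (x *: u + y *: v).

End MLambda.

(* Main.v *)
Require Import Defs.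
From mathcomp Require Import all_boot all_algebra.
From mathcomp Require Import ring.
Import GRing.Theory.
Local Open Scope ring_scope.

Section Calc.
Variables (F : fieldType) (q a b c lam : F).

Lemma phi0 : phi q a b c lam 0 = 0.
Proof. by rewrite /phi !expr0 invr1 subrr !mulr0 !mul0r. Qed.

Lemma Aop0 : Aop q a lam (mvec F 0) = theta q a lam 0 *: 1 + 'X.
Proof.
rewrite /Aop /mvec expr0 size_poly1 big_nat1 coefC /= scale1r expr0 expr1.
by [].
Qed.

Lemma Bop0 : Bop q a b c lam (mvec F 0) = thetas q b lam 0 *: 1.
Proof.
rewrite /Bop /mvec expr0 size_poly1 big_nat1 coefC /= scale1r expr0 phi0.
by rewrite scale0r addr0.
Qed.

Lemma BA0 : Bop q a b c lam (Aop q a lam (mvec F 0)) =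
  (theta q a lam 0 * thetas q b lam 0 + phi q a b c lam 1) *: 1
   + thetas q b lam 1 *: 'X.
Proof.
rewrite Aop0 /Bop.
have hs : size (theta q a lam 0 *: 1 + 'X : {poly F}) = 2%N.
  by rewrite addrC alg_polyC size_XaddC.
rewrite hs big_mkord !big_ord_recl big_ord0 addr0 /=.
rewrite /bump /= add0n !alg_polyC !coefD !coefX !coefC /= addr0 add0r.
rewrite phi0 addn0 expr1 scale1r polyC0 addr0.
rewrite -!mul_polyC !(polyCD, polyCM) polyC1. ring.
Qed.

Lemma key (s k : F) :
  Bop q a b c lam (Aop q a lam (mvec F 0)) - s *: Aop q a lam (mvec F 0)
    - k *: mvec F 0 =
  (theta q a lam 0 * thetas q b lam 0 + phi q a b c lam 1
     - s * theta q a lam 0 - k) *: 1 + (thetas q b lam 1 - s) *: 'X.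
Proof.
rewrite BA0 Aop0 /mvec expr0 -!mul_polyC !(polyCD, polyCM, polyCB, polyCN).
ring.
Qed.

End Calc.

Theorem lemma3p5 (F : closedFieldType) (q : F) (d : nat)
  (Hq : d.-primitive_root q) (Hd : d \notin [:: 1%N; 2%N; 4%N])
  (a b c lam : F) (Ha : a != 0) (Hb : b != 0) (Hc : c != 0) (Hl : lam != 0)
  (O : {poly F} -> Prop) (HO : submodule q a b c lam O)
  (Hm0 : ~ O (mvec F 0)) :
  marginal_weight_vector_quot q a b c lam O (b * lam^-1) (mvec F 0) /\
  (marginal_weight_vector_quot q a b c lam O (b^-1 * lam) (mvec F 0) <->
     (b * lam^-1 = b^-1 * lam \/ lin_dep_quot O (mvec F 0) (mvec F 1))).
Proof.
have dgt0 : (0 < d)%N by apply: prim_order_gt0 Hq.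
have q0 : q != 0.
  apply/eqP => q0; move: (prim_expr_order Hq); rewrite q0 expr0n.
  by rewrite eqn0Ngt dgt0 /= => /eqP; rewrite eq_sym oner_eq0.
have q2 : q ^+ 2 - q ^- 2 != 0.
  apply/eqP => /eqP; rewrite subr_eq0 => /eqP h.
  have : q ^+ 4 == 1.
    by rewrite (_ : 4 = 2 + 2)%N // exprD {2}h mulfV // expf_neq0.
  rewrite -(prim_order_dvd Hq) => hd.
  move: Hd; have := @dvdn_leq d 4 isT hd.
  by clear Hq; case: d dgt0 hd => [|[|[|[|[|[|]]]]]].
case: HO => O0 OD OZ [OA OB OC].
have m0E : mvec F 0 = 1 by rewrite /mvec expr0.
have th0 : thetas q b lam 0 = b * lam^-1 + b^-1 * lam.
  by rewrite /thetas muln0 expr0 invr1 !mulr1.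
split.
  split => //.
    rewrite Bop0 m0E -scalerBl (invfM b) invrK th0 (_ : _ - _ = 0) ?scale0r //.
    by ring.
  exists (theta q a lam 0 * thetas q b lam 0 + phi q a b c lam 1 -
   (b * lam^-1 * q ^+ 2 + (b * lam^-1)^-1 * q ^- 2) * theta q a lam 0).
  rewrite key (_ : thetas q b lam 1 - _ = 0).
    by rewrite subrr !scale0r addr0.
  rewrite /thetas muln1. by rewrite (invfM b) invrK; ring.
set e := (b * lam^-1 - b^-1 * lam) * (q ^+ 2 - q ^- 2).
have eE : thetas q b lam 1 - (b^-1 * lam * q ^+ 2 + (b^-1 * lam)^-1 * q ^- 2) = e.
  by rewrite /e /thetas (invfM b^-1) invrK muln1; ring.
have hB : O (Bop q a b c lam (mvec F 0) - (b^-1 * lam + (b^-1 * lam)^-1) *: mvec F 0).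
  rewrite Bop0 m0E -scalerBl (invfM b^-1) invrK th0 (_ : _ - _ = 0) ?scale0r //.
  by ring.
split.
  case=> _ _ [k]; rewrite key eE.
  case: (eqVneq (b * lam^-1) (b^-1 * lam)) => [->|ne]; first by left.
  move=> hk; right.
  exists (theta q a lam 0 * thetas q b lam 0 + phi q a b c lam 1 -
   (b^-1 * lam * q ^+ 2 + (b^-1 * lam)^-1 * q ^- 2) * theta q a lam 0 - k), e.
  split; first by right; rewrite /e mulf_neq0 // subr_eq0.
  by rewrite m0E /mvec expr1.
case=> [eq|[x [y [nz hxy]]]].
  split => //.
  exists (theta q a lam 0 * thetas q b lam 0 + phi q a b c lam 1 -
   (b^-1 * lam * q ^+ 2 + (b^-1 * lam)^-1 * q ^- 2) * theta q a lam 0).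
  rewrite key eE /e eq !subrr !mul0r !scale0r addr0.
  by [].
have y0 : y != 0.
  apply/eqP=> y0; have x0 : x != 0 by case: nz => //; rewrite y0 eqxx.
  move: hxy; rewrite y0 scale0r addr0 => hx.
  by apply: Hm0; have := OZ x^-1 _ hx; rewrite scalerA mulVf // scale1r.
split => //.
exists (theta q a lam 0 * thetas q b lam 0 + phi q a b c lam 1 -
   (b^-1 * lam * q ^+ 2 + (b^-1 * lam)^-1 * q ^- 2) * theta q a lam 0
   - e * x / y).
rewrite key eE (_ : _ - _ = e * x / y); last by ring.
have -> : (e * x / y) *: 1 + e *: 'X = (e / y) *: (x *: mvec F 0 + y *: mvec F 1).
  rewrite m0E /mvec expr1 scalerDr !scalerA divfK //.
  by rewrite mulrAC.
by apply: OZ.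
Qed.
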